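(* Let $\mathcal{C}$ and $\mathcal{C}'$ be non-attacking $q$-configurations. Then there exists $N$ such that for every $n\ge N$ with $\mathrm{inloss}_n(\mathcal{C}) = \mathrm{inloss}_n(\mathcal{C}')$ we have $\gamma(\mathcal{C}') - \gamma(\mathcal{C}) = \eta_n(\mathcal{C}') - \eta_n(\mathcal{C})$.
   Context: For $n \in \mathbb{N}$ let $I_n = \{\lfloor (2-n)/2 \rfloor, \ldots, \lfloor n/2 \rfloor\}$ and $\mathcal{B}_n = I_n \times I_n$. A $q$-configuration is a set $\mathcal{C} \subset \mathbb{Z}\times\mathbb{Z}$ with $|\mathcal{C}|=q$. For $Q=(x,y)$, $A(Q) = \{(x+i,y),(x,y+i),(x+i,y+i),(x+i,y-i) : i \in \mathbb{Z}\setminus\{0\}\}$ and $A(\mathcal{C}) = \bigcup_{Q\in\mathcal{C}} A(Q)$. $\mathcal{C}$ is non-attacking if $Q'\notin A(Q)$ for all distinct $Q,Q'\in\mathcal{C}$. The attacking number is $a_{\mathcal{C}}(s) = \#\{Q \in \mathcal{C} : s \in A(Q)\}$ and $\mathrm{inloss}_n(\mathcal{C}) = \sum_{s \in A(\mathcal{C})\cap\mathcal{B}_n} (a_{\mathcal{C}}(s) - 1)$. A Queen at $(x_1,x_2)$ is even if $x_1-x_2\equiv 0\pmod 2$ and odd otherwise; if $\mathcal{C}$ has $e$ even and $o$ odd Queens, $\gamma(\mathcal{C}) = 12\binom{e}{2}+12\binom{o}{2}+10eo$, and $\eta_n(\mathcal{C}) = \sum_{s\in A(\mathcal{C})\cap\mathcal{B}_n}\left[\binom{a_{\mathcal{C}}(s)}{2}-(a_{\mathcal{C}}(s)-1)\right]$.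 *)

(* Defs.v *)
From HB Require Import structures.
From mathcomp Require Import all_boot all_order all_algebra.
From mathcomp Require Import finmap.
Set Implicit Arguments. Unset Strict Implicit. Unset Printing Implicit Defensive.
Import Order.TTheory GRing.Theory Num.Theory.
Local Open Scope fset_scope.
Local Open Scope ring_scope.

Definition square := (int * int)%type.

(* I_n = {floor((2-n)/2), ..., floor(n/2)}; intdiv's %/ with positive divisor is floor division. *)
Definition Ilo (n : nat) : int := ((2 - n%:Z) %/ 2)%Z.
Definition Ihi (n : nat) : int := ((n%:Z) %/ 2)%Z.
Definition Iseq (n : nat) : seq int :=
  [seq Ilo n + i%:Z | i <- iota 0 (absz (Ihi n - Ilo n + 1))].
Definition Bseq (n : nat) : seq square :=
  [seq (x, y) | x <- Iseq n, y <- Iseq n].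

(* attacks Q s  <=>  s \in A(Q), i.e. s = Q + i*d for some i <> 0 and
   d in {(1,0),(0,1),(1,1),(1,-1)}. *)
Definition attacks (Q s : square) : bool :=
  let dx := s.1 - Q.1 in let dy := s.2 - Q.2 in
  (s != Q) && [|| dy == 0, dx == 0, dx == dy | dx == - dy].

Definition nonattacking (C : {fset square}) : Prop :=
  forall Q Q', Q \in C -> Q' \in C -> Q != Q' -> ~~ attacks Q Q'.

Definition anum (C : {fset square}) (s : square) : nat :=
  #|` [fset Q in C | attacks Q s]|.

(* inloss_n(C) = sum over s in A(C) ∩ B_n of (a_C(s) - 1);
   s \in A(C) iff a_C(s) > 0. *)
Definition inloss (n : nat) (C : {fset square}) : int :=
  \sum_(s <- Bseq n | (0 < anum C s)%N) ((anum C s)%:Z - 1).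

Definition etaQ (n : nat) (C : {fset square}) : int :=
  \sum_(s <- Bseq n | (0 < anum C s)%N)
     (('C(anum C s, 2))%:Z - ((anum C s)%:Z - 1)).

Definition even_queen (Q : square) : bool := ((Q.1 - Q.2) %% 2)%Z == 0.

Definition num_even (C : {fset square}) : nat := #|` [fset Q in C | even_queen Q]|.
Definition num_odd (C : {fset square}) : nat := #|` [fset Q in C | ~~ even_queen Q]|.

Definition gammaQ (C : {fset square}) : int :=
  (12 * 'C(num_even C, 2) + 12 * 'C(num_odd C, 2) + 10 * num_even C * num_odd C)%N%:Z.

(* Main.v *)
Require Import Defs.
From HB Require Import structures.
From mathcomp Require Import all_boot all_order all_algebra.
From mathcomp Require Import finmap zify ring.
Import Order.TTheory GRing.Theory Num.Theory.
Local Open Scope fset_scope.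
Local Open Scope ring_scope.


Definition pts (Q Q' : square) : seq square :=
  let a := Q.1 in let b := Q.2 in let c := Q'.1 in let d := Q'.2 in
  [:: (c,b); (b+c-d,b); (c+d-b,b); (a,d); (a,a-c+d); (a,c+d-a); (d+a-b,d);
      (c,c-a+b); (a+b-d,d); (c,a+b-c)] ++
  if even_queen Q == even_queen Q' then
    [:: ((a-b+c+d)%/2, (c+d-a+b)%/2)%Z; ((a+b+c-d)%/2, (a+b-c+d)%/2)%Z]
  else [::].

Ltac bsolve :=
 lazymatch goal with
 | |- is_true (_ && _) => apply/andP; split; bsolve
 | |- is_true (_ || _) => first [ apply/orP; left; bsolve | apply/orP; right; bsolve ]
 | |- _ => lia
 end.

Lemma par (a b c d : int) : (even_queen (a,b) == even_queen (c,d)) =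
   (((a-b)%%2)%Z == ((c-d)%%2)%Z).
Proof. rewrite /even_queen /=. apply/eqP/eqP; lia. Qed.

Lemma pts_fwd (Q Q' s : square) : Q != Q' -> ~~ attacks Q Q' ->
  attacks Q s && attacks Q' s -> (s \in pts Q Q').
Proof.
case: Q => a b; case: Q' => c d; case: s => x y.
rewrite /pts /attacks /= par !xpair_eqE !negb_and negb_or.
move=> h0 h.
have [h2 [h3 [h4 h5]]] : (b != d) /\ (a != c) /\ (a - b != c - d) /\ (a + b != c + d) by move: h0 h; lia.
clear h0 h.
move=> /and3P[/andP[n1 /or4P e1] n2 /or4P e2].
case: ifP => hp; rewrite !inE !xpair_eqE.
all: case: e1 => /eqP e1; case: e2 => /eqP e2; bsolve.
Qed.

Lemma pts_bwd (Q Q' : square) : Q != Q' -> ~~ attacks Q Q' ->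
  all (fun s => attacks Q s && attacks Q' s) (pts Q Q').
Proof.
case: Q => a b; case: Q' => c d.
rewrite /pts /attacks /= par !xpair_eqE.
move=> h0 h.
have [h2 [h3 [h4 h5]]] : (b != d) /\ (a != c) /\ (a - b != c - d) /\ (a + b != c + d) by move: h0 h; lia.
clear h0 h.
case: ifP => hp /=; rewrite ?xpair_eqE; bsolve.
Qed.

Lemma pts_uniq (Q Q' : square) : Q != Q' -> ~~ attacks Q Q' -> uniq (pts Q Q').
Proof.
case: Q => a b; case: Q' => c d.
rewrite /pts /attacks /= par !xpair_eqE.
move=> h0 h.
have [h2 [h3 [h4 h5]]] : (b != d) /\ (a != c) /\ (a - b != c - d) /\ (a + b != c + d) by move: h0 h; lia.
clear h0 h.
case: ifP => hp /=; rewrite !inE !xpair_eqE !negb_or; bsolve.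
Qed.

Definition ind (b : bool) : int := if b then 1 else 0.

Lemma indM a b : ind (a && b) = ind a * ind b.
Proof. by case: a; case: b; rewrite /ind ?mulr1 ?mulr0 ?mul0r. Qed.

Lemma indK a : ind a * ind a = ind a.
Proof. by case: a; rewrite /ind ?mulr1 ?mulr0. Qed.

Lemma card_ind (C : {fset square}) (P : pred square) :
  (#|` [fset Q in C | P Q]|)%:Z = \sum_(Q <- C) ind (P Q).
Proof.
rewrite card_fset_sum1 -big_fset_condE.
elim: (enum_fset C) => [|x r IH]; first by rewrite !big_nil.
rewrite !big_cons; case: (P x) => //=.
by rewrite PoszD IH.
by rewrite IH add0r.
Qed.

Lemma Iseq_uniq n : uniq (Iseq n).
Proof. rewrite /Iseq map_inj_uniq ?iota_uniq // => i j; lia. Qed.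

Lemma Iseq_mem n (x : int) (K : nat) : (6*K+2 <= n)%N ->
  - (3*K)%:Z <= x <= (3*K)%:Z -> x \in Iseq n.
Proof.
move=> hn hx; apply/mapP; exists (absz (x - Ilo n)).
  rewrite mem_iota /= /Ilo /Ihi; lia.
rewrite /Ilo; lia.
Qed.

Lemma Bseq_uniq n : uniq (Defs.Bseq n).
Proof.
apply: allpairs_uniq; try exact: Iseq_uniq.
by move=> [a b] [c d] _ _ /=.
Qed.

Lemma sum_mem (B L : seq square) : uniq B -> uniq L -> {subset L <= B} ->
  \sum_(s <- B) ind (s \in L) = (size L)%:Z.
Proof.
move=> uB; elim: L => [|t L IH] /=.
  by move=> _ _; rewrite big1.
move=> /andP[tL uL] sub.
have -> : \sum_(s <- B) ind (s \in t :: L) =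
   \sum_(s <- B) (ind (s == t) + ind (s \in L)).
  apply: eq_bigr => s _; rewrite inE.
  case: (eqVneq s t) => [->|]; first by rewrite (negbTE tL) /ind.
  by rewrite /ind /= add0r.
rewrite big_split /= IH //; last by move=> x hx; apply: sub; rewrite inE hx orbT.
rewrite (bigD1_seq t) //=; last by apply: sub; rewrite inE eqxx.
rewrite big1 /=; last by move=> i /negbTE ->.
by rewrite eqxx /ind addr0 -addn1 PoszD addrC.
Qed.

Definition bnd (K : nat) (s : square) : bool :=
  (- (K%:Z) <= s.1 <= K%:Z) && (- (K%:Z) <= s.2 <= K%:Z).

Lemma pts_bound (K : nat) (Q Q' : square) : bnd K Q -> bnd K Q' ->
  all (bnd (3*K)) (pts Q Q').
Proof.
case: Q => a b; case: Q' => c d; rewrite /bnd /pts /=.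
move=> /andP[/andP[h1 h2] /andP[h3 h4]] /andP[/andP[h5 h6] /andP[h7 h8]].
case: ifP => hp /=; bsolve.
Qed.

Lemma bin2E (k : nat) : 2 * ('C(k, 2))%:Z = k%:Z * (k%:Z - 1).
Proof.
have h : ('C(k, 2) * 2 = k * k.-1)%N.
  elim: k => [|k IH] //; rewrite binS bin1; case: k IH => [|k] IH //=; nia.
case: k h => [|k] h //=. nia.
Qed.


Lemma offdiag (T : eqType) (r : seq T) (G : T -> T -> int) : uniq r ->
  \sum_(Q <- r) \sum_(Q' <- r) ind (Q' != Q) * G Q Q' =
  \sum_(Q <- r) \sum_(Q' <- r) G Q Q' - \sum_(Q <- r) G Q Q.
Proof.
move=> ur; rewrite -sumrB; apply: eq_big_seq => Q hQ.
rewrite (bigD1_seq Q) //= [X in _ = X - _](bigD1_seq Q) //= eqxx /ind mul0r add0r.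
rewrite addrC addrK; apply: eq_bigr => Q' ->; by rewrite mul1r.
Qed.

Lemma sq (T : eqType) (r : seq T) (f : T -> bool) : uniq r ->
  let k := \sum_(Q <- r) ind (f Q) in
  k * (k - 1) = \sum_(Q <- r) \sum_(Q' <- r) ind (Q' != Q) * (ind (f Q) * ind (f Q')).
Proof.
move=> ur k; rewrite offdiag // mulrBr mulr1; congr (_ - _).
  rewrite /k mulr_suml; apply: eq_bigr => Q _; by rewrite mulr_sumr.
by rewrite /k; apply: eq_bigr => Q _; rewrite indK.
Qed.

Lemma anumE (C : {fset square}) s : (anum C s)%:Z = \sum_(Q <- C) ind (attacks Q s).
Proof. by rewrite /anum card_ind. Qed.

Definition xe Q := ind (even_queen Q).
Definition ye Q := ind (~~ even_queen Q).

Lemma wE Q Q' : (size (pts Q Q'))%:Z = 10 + 2 * (xe Q * xe Q') + 2 * (ye Q * ye Q').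
Proof.
rewrite /pts size_cat /xe /ye; case: (even_queen Q); case: (even_queen Q') => //=.
Qed.

Lemma gam (C : {fset square}) :
  2 * gammaQ C = \sum_(Q <- C) \sum_(Q' <- C) ind (Q' != Q) * (size (pts Q Q'))%:Z.
Proof.
rewrite offdiag ?fset_uniq //.
have he : (num_even C)%:Z = \sum_(Q <- C) xe Q by rewrite /num_even card_ind.
have ho : (num_odd C)%:Z = \sum_(Q <- C) ye Q by rewrite /num_odd card_ind.
have h1 : \sum_(Q <- C) (1 : int) = \sum_(Q <- C) xe Q + \sum_(Q <- C) ye Q.
  rewrite -big_split; apply: eq_bigr => Q _; rewrite /xe /ye; by case: (even_queen Q).
have hd : \sum_(Q <- C) (size (pts Q Q))%:Z = 12 * \sum_(Q <- C) (1 : int).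
  rewrite mulr_sumr; apply: eq_bigr => Q _; by rewrite /pts eqxx size_cat.
have hs : \sum_(Q <- C) \sum_(Q' <- C) (size (pts Q Q'))%:Z =
   10 * (\sum_(Q <- C) (1 : int)) * (\sum_(Q <- C) (1 : int)) +
   2 * (\sum_(Q <- C) xe Q) * (\sum_(Q <- C) xe Q) +
   2 * (\sum_(Q <- C) ye Q) * (\sum_(Q <- C) ye Q).
  transitivity (\sum_(Q <- C) ((10 * 1) * (\sum_(Q' <- C) (1 : int)) + (2 * xe Q) * (\sum_(Q' <- C) xe Q')
      + (2 * ye Q) * (\sum_(Q' <- C) ye Q'))).
    apply: eq_bigr => Q _; rewrite !mulr_sumr -!big_split; apply: eq_bigr => Q' _.
    rewrite /= wE; ring.
  rewrite !big_split /= -!mulr_suml -!mulr_sumr.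
  have -> : \sum_(i <- C) (10:int) = 10 * \sum_(i <- C) 1 by rewrite mulr_sumr; apply: eq_bigr => ? _; rewrite mulr1.
  ring.
rewrite hs hd h1 -he -ho /gammaQ.
have be := bin2E (num_even C); have bo := bin2E (num_odd C).
move: be bo; set e := num_even C; set o := num_odd C; set ce := 'C(e, 2); set co := 'C(o, 2).
move=> be bo; rewrite !PoszD !PoszM; nia.
Qed.


Lemma key (C : {fset square}) : nonattacking C -> exists N : nat, forall n : nat, (N <= n)%N ->
  \sum_(s <- Defs.Bseq n | (0 < anum C s)%N) ('C(anum C s, 2))%:Z = gammaQ C.
Proof.
move=> hna.
pose K := (\sum_(Q <- C) (absz Q.1 + absz Q.2))%N.
exists (6 * K + 2)%N => n hn.
have hKb : forall Q, Q \in C -> (absz Q.1 + absz Q.2 <= K)%N.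
  by move=> Q hQ; rewrite /K (bigD1_seq Q) ?fset_uniq //= leq_addr.
clearbody K.
have hK : forall Q, Q \in C -> bnd K Q.
  move=> Q hQ; have := hKb Q hQ; case: Q {hQ} => a b /=.
  rewrite /bnd /=; lia.
have hpts : forall Q Q', Q \in C -> Q' \in C -> Q' != Q ->
    \sum_(s <- Defs.Bseq n) ind (attacks Q s) * ind (attacks Q' s) = (size (pts Q Q'))%:Z.
  move=> Q Q' hQ hQ' hne.
  have hne' : Q != Q' by rewrite eq_sym.
  have hnat := hna Q Q' hQ hQ' hne'.
  rewrite -(@sum_mem (Defs.Bseq n) (pts Q Q') (Bseq_uniq n) (@pts_uniq Q Q' hne' hnat)).
    apply: eq_bigr => s _; rewrite -indM; congr ind; apply/idP/idP.
      exact: pts_fwd.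
    by move=> h; exact: (allP (@pts_bwd Q Q' hne' hnat) s h).
  move=> s hs; have := allP (@pts_bound K Q Q' (hK Q hQ) (hK Q' hQ')) s hs.
  case: s {hs} => x y; rewrite /bnd /= => /andP[hx hy].
  by apply: allpairs_f; [apply: (@Iseq_mem n x K hn) | apply: (@Iseq_mem n y K hn)]; move: hx hy; lia.
set L := \sum_(s <- _ | _) _.
suff h : 2 * L = 2 * gammaQ C by lia.
rewrite /L.
rewrite gam big_mkcond /= mulr_sumr.
transitivity (\sum_(s <- Defs.Bseq n) \sum_(Q <- C) \sum_(Q' <- C)
    ind (Q' != Q) * (ind (attacks Q s) * ind (attacks Q' s))).
  apply: eq_bigr => s _.
  rewrite -(@sq _ C (fun Q => attacks Q s) (fset_uniq C)) /= -anumE.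
  case: (anum C s) => [|k] //=; by rewrite -bin2E.
rewrite exchange_big /=; apply: eq_big_seq => Q hQ.
rewrite exchange_big /=; apply: eq_big_seq => Q' hQ'.
rewrite -mulr_sumr.
case: (eqVneq Q' Q) => [->|hne]; first by rewrite /ind !mul0r.
by rewrite hpts.
Qed.


Lemma etaE n C : etaQ n C =
  \sum_(s <- Defs.Bseq n | (0 < anum C s)%N) ('C(anum C s, 2))%:Z - inloss n C.
Proof. by rewrite /etaQ /inloss sumrB. Qed.

Theorem mainTheorem8 (q : nat) (C C' : {fset square}) :
  #|` C| = q -> #|` C'| = q -> nonattacking C -> nonattacking C' ->
  exists N : nat, forall n : nat, (N <= n)%N -> inloss n C = inloss n C' ->
    gammaQ C' - gammaQ C = etaQ n C' - etaQ n C.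
Proof.
move=> _ _ hC hC'.
have [N1 h1] := @key C hC; have [N2 h2] := @key C' hC'.
exists (maxn N1 N2) => n hn hil.
rewrite !etaE h1 ?h2 ?hil.
- by rewrite opprB addrA subrK.
- exact: leq_trans (leq_maxr _ _) hn.
- exact: leq_trans (leq_maxl _ _) hn.
Qed.
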